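(* Let $r\geq2$ and $\ell\geq1$ be integers and $c>0$. Let $\mathcal{H}$ be an $\ell$-partite $\ell$-uniform hypergraph with parts $V_1,\dots,V_\ell$, each of size $n$, having at least $\ell c n^\ell$ edges. Let $\varphi$ be an $r$-colouring of the edges of the complete graphs on $V_1,\dots,V_\ell$ (i.e. of all pairs inside each $V_i$). Then there exist an integer $m\geq \left(\min\{\frac c2,\frac{1}{2r\log r}\}\right)^\ell\log n$ and sets $S_i\subseteq V_i$ with $|S_i|=m$ for $i\in[\ell]$ such that $\varphi$ is constant on the pairs inside each $S_i$, and $\mathcal{H}$ covers the complete $\ell$-partite graph with parts $S_1,\dots,S_\ell$.
   Context: Edges of $\mathcal{H}$ are $\ell$-tuples $(v_1,\dots,v_\ell)$ with $v_i\in V_i$. Let $K_2(\mathcal{H})$ be the set of vertex pairs contained in some edge of $\mathcal{H}$. For a complete $\ell$-partite graph $F$ with parts of size $m$, we say $\mathcal{H}$ covers $F$ if every edge of $F$ belongs to $K_2(\mathcal{H})$ and there are $m$ pairwise disjoint edges of $\mathcal{H}$ each contained in $V(F)$. *)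

(* Defs.v *)
From HB Require Import structures.
From mathcomp Require Import all_boot all_order all_algebra.
From mathcomp Require Import all_classical all_reals all_analysis.
Set Implicit Arguments. Unset Strict Implicit. Unset Printing Implicit Defensive.
Import Order.TTheory GRing.Theory Num.Theory.

(* Vertices of the l-partite hypergraph: vertex (i, v) with i : 'I_l the part
   index and v : 'I_n the position inside V_i.  An edge (v_1,...,v_l) with
   v_i in V_i is a finite function e : 'I_l -> 'I_n. *)
Definition edge (l n : nat) := {ffun 'I_l -> 'I_n}.

Definition inK2 (l n : nat) (H : {set edge l n}) (i j : 'I_l) (u v : 'I_n) : bool :=
  [exists e in H, (e i == u) && (e j == v)].

Definition covers (l n : nat) (H : {set edge l n}) (S : 'I_l -> {set 'I_n}) (m : nat) : Prop :=
  (forall i j : 'I_l, i != j -> forall u v : 'I_n, u \in S i -> v \in S j -> inK2 H i j u v)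
  /\ exists M : {set edge l n},
     [/\ M \subset H, #|M| = m,
         (forall e, e \in M -> forall i, e i \in S i)
       & (forall e f, e \in M -> f \in M -> e != f -> forall i, e i != f i)].

(* phi i colours the pairs inside V_i; a pair {u,v} (u != v) is the 2-set [set u; v].
   S_i is monochromatic if all pairs inside S_i get the same colour. *)
Definition monochromatic (l n r : nat) (phi : 'I_l -> {set 'I_n} -> 'I_r)
  (i : 'I_l) (S : {set 'I_n}) : Prop :=
  exists k : 'I_r, forall u v : 'I_n, u \in S -> v \in S -> u != v -> phi i [set u; v] = k.

(* Main.v *)
Require Import Defs.
From HB Require Import structures.
From mathcomp Require Import all_boot all_order all_algebra.
From mathcomp Require Import all_classical all_reals all_analysis.
Import Order.TTheory GRing.Theory Num.Theory.
Local Open Scope ring_scope.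
From mathcomp Require Import zify ring lra.
Set Implicit Arguments. Unset Strict Implicit. Unset Printing Implicit Defensive.
From mathcomp Require Import ssrbool eqtype ssrnat seq fintype finset bigop binomial.

Local Open Scope nat_scope.
Lemma ramsey_gen n r (col : {set 'I_n} -> 'I_r) : (1 < r)%N ->
  forall s (a : 'I_r -> nat) (Z : {set 'I_n}), (\sum_k a k)%N = s -> (r ^ s <= #|Z|)%N ->
  exists k (S : {set 'I_n}), [/\ S \subset Z, #|S| = (a k).+1 &
     forall u v, u \in S -> v \in S -> u != v -> col [set u; v] = k].
Proof.
move=> r1; elim=> [|s IH] a Z sa hZ.
- have [x xZ] : exists x, x \in Z.
    by apply/set0Pn; rewrite -card_gt0; apply: leq_trans hZ; rewrite expn_gt0 ltnW.
  have r0 : (0 < r)%N by apply: ltnW.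
  exists (Ordinal r0), [set x]; split.
  + by rewrite sub1set.
  + rewrite cards1; congr _.+1.
    by have h := sa; rewrite (bigD1 (Ordinal r0)) //= in h; lia.
  + by move=> u v /set1P -> /set1P ->; rewrite eqxx.
have [x xZ] : exists x, x \in Z.
  by apply/set0Pn; rewrite -card_gt0; apply: leq_trans hZ; rewrite expn_gt0 ltnW.
case: (pickP (fun k => a k == 0%N)) => [k0 /eqP ak0|hpos].
  exists k0, [set x]; split.
  + by rewrite sub1set.
  + by rewrite cards1 ak0.
  + by move=> u v /set1P -> /set1P ->; rewrite eqxx.
pose C k := [set y in Z :\ x | col [set x; y] == k].
have [k hk] : exists k, (r ^ s <= #|C k|)%N.
  case: (boolP [exists k, r ^ s <= #|C k|]) => [/existsP //|/existsPn hno]; exfalso.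
  have hsum : #|Z :\ x| = (\sum_k #|C k|)%N.
    rewrite -sum1_card (partition_big (fun y => col [set x; y]) predT) //=.
    apply: eq_bigr => k _; rewrite -sum1_card; apply: eq_bigl => y.
    by rewrite !inE.
  have : (#|Z :\ x| <= r * (r ^ s).-1)%N.
    rewrite hsum; apply: (@leq_trans (\sum_(k < r) (r ^ s).-1)%N); last first.
      by rewrite sum_nat_const card_ord.
    apply: leq_sum => k _.
    by have := hno k; rewrite -ltnNge => h; rewrite -ltnS prednK // expn_gt0 ltnW.
  have := cardsD1 x Z; rewrite xZ /= => hc.
  have hp : (0 < r ^ s)%N by rewrite expn_gt0 ltnW.
  rewrite expnS in hZ.
  move: hp hZ hc; move: (r ^ s) (#|Z|) (#|Z :\ x|) => p z zx; nia.
pose a' := fun i => if i == k then (a i).-1 else a i.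
have akpos : (0 < a k)%N by rewrite lt0n; apply/negP => h; have := hpos k; rewrite /= h.
have sa' : (\sum_i a' i)%N = s.
  rewrite (bigD1 k) //= /a' eqxx.
  rewrite (eq_bigr a) => [|i /negbTE hi]; last by rewrite hi.
  move: sa; rewrite (bigD1 k) //=.
  move: akpos; move: (a k) (\sum_(i | i != k) a i)%N => p q; lia.
have [k' [S' [sS' cS' mS']]] := IH a' (C k) sa' hk.
have hS'x : x \notin S'.
  by apply/negP => /(subsetP sS'); rewrite !inE eqxx.
case: (eqVneq k' k) => [ekk|nkk].
- subst k'; exists k, (x |: S'); split.
  + apply/subsetP => y; rewrite in_setU1 => /orP [/eqP -> //|/(subsetP sS')].
    by rewrite !inE => /andP [/andP [_ ->]].
  + by rewrite cardsU1 hS'x cS' /a' eqxx add1n prednK.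
  + have hC : forall y, y \in S' -> col [set x; y] = k.
      by move=> y /(subsetP sS'); rewrite !inE => /andP [_ /eqP].
    move=> u v; rewrite !in_setU1 => /orP [/eqP ->|hu] /orP [/eqP ->|hv].
    * by rewrite eqxx.
    * by move=> _; apply: hC.
    * by move=> _; rewrite setUC; apply: hC.
    * by apply: mS'.
- exists k', S'; split => //.
  + apply: subset_trans sS' _; apply/subsetP => y; rewrite !inE.
    by case/andP => /andP [].
  + by rewrite cS' /a' (negbTE nkk).
Qed.

Lemma ramsey n r (col : {set 'I_n} -> 'I_r) (m : nat) (Z : {set 'I_n}) :
  (1 < r)%N -> (0 < m)%N -> (r ^ (r * m.-1) <= #|Z|)%N ->
  exists (k : 'I_r) (S : {set 'I_n}), [/\ S \subset Z, #|S| = m &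
     forall u v, u \in S -> v \in S -> u != v -> col [set u; v] = k].
Proof.
move=> r1 m0 hZ.
have := @ramsey_gen n r col r1 (r * m.-1) (fun _ => m.-1) Z.
rewrite sum_nat_const card_ord => /(_ erefl hZ) [k [S [h1 h2 h3]]].
by exists k, S; split => //; rewrite h2 prednK.
Qed.

Local Open Scope ring_scope.
Lemma chebyshev (R : realDomainType) (I : finType) (a b : I -> R) :
  (forall y z, 0 <= (a y - a z) * (b y - b z)) ->
  (\sum_y a y) * (\sum_y b y) <= #|I|%:R * \sum_y a y * b y.
Proof.
move=> h.
have E : \sum_y \sum_z (a y - a z) * (b y - b z)
   = \sum_y \sum_(z : I) (a y * b y) - \sum_y \sum_z (a y * b z)
     - \sum_y \sum_z (a z * b y) + \sum_(y : I) \sum_z (a z * b z).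
  rewrite -!sumrB -big_split /=; apply: eq_bigr => y _.
  rewrite -!sumrB -big_split /=; apply: eq_bigr => z _.
  ring.
have S1 : \sum_y \sum_(z : I) (a y * b y) = #|I|%:R * \sum_y a y * b y.
  rewrite mulr_sumr; apply: eq_bigr => y _; rewrite sumr_const mulr_natl //.
have S4 : \sum_(y : I) \sum_z (a z * b z) = #|I|%:R * \sum_y a y * b y.
  by rewrite sumr_const mulr_natl.
have S2 : \sum_y \sum_z (a y * b z) = (\sum_y a y) * (\sum_y b y).
  by rewrite big_distrlr.
have S3 : \sum_y \sum_z (a z * b y) = (\sum_y a y) * (\sum_y b y).
  rewrite mulrC big_distrlr /=; apply: eq_bigr => y _; apply: eq_bigr => z _.
  by rewrite mulrC.
have : 0 <= \sum_y \sum_z (a y - a z) * (b y - b z).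
  by apply: sumr_ge0 => y _; apply: sumr_ge0 => z _; apply: h.
rewrite E S1 S2 S3 S4 => H0.
lra.
Qed.

Lemma leq_ffact_l a b m : (a <= b)%N -> (a ^_ m <= b ^_ m)%N.
Proof.
move=> ab; rewrite !ffact_prod; apply: leq_prod => i _; exact: leq_sub2r.
Qed.

Lemma natr_ffactS (R : realDomainType) d m :
  ((d ^_ m.+1)%:R : R) = (d ^_ m)%:R * (d%:R - m%:R).
Proof.
rewrite ffactnSr natrM; case: (leqP m d) => hm; first by rewrite natrB.
have -> : d ^_ m = 0%N by apply/eqP; rewrite -leqn0 leqNgt ffact_gt0 -ltnNge.
by rewrite !mul0r.
Qed.

Lemma ffact_sum (R : realFieldType) (n : nat) (d : 'I_n -> nat) (A : R) :
  (0 < n)%N -> n%:R * A <= \sum_y (d y)%:R ->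
  forall m : nat, m%:R - 1 <= A ->
  n%:R * \prod_(i < m) (A - i%:R) <= \sum_y ((d y) ^_ m)%:R.
Proof.
move=> n0 hA; elim=> [|m IH] hm.
  by rewrite big_ord0 mulr1 (eq_bigr (fun _ => 1)) // sumr_const card_ord.
have hmA : m%:R <= A by move: hm; rewrite -natr1; lra.
have IH' := IH (ltac:(lra)).
have P0 : 0 <= \prod_(i < m) (A - i%:R).
  apply: prodr_ge0 => i _; rewrite subr_ge0; apply: le_trans hmA.
  by rewrite ler_nat ltnW.
set P := \prod_(i < m) (A - i%:R) in IH' P0 *.
rewrite big_ord_recr /= -/P.
under eq_bigr => y _ do rewrite natr_ffactS.
have hb : n%:R * (A - m%:R) <= \sum_y ((d y)%:R - m%:R).
  by rewrite sumrB sumr_const card_ord -(mulr_natl m%:R n) mulrBr lerD2r.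
have hch := @chebyshev R 'I_n (fun y => ((d y) ^_ m)%:R) (fun y => (d y)%:R - m%:R).
rewrite card_ord in hch.
have hmono : forall y z : 'I_n, 0 <= (((d y) ^_ m)%:R - ((d z) ^_ m)%:R : R) * (((d y)%:R - m%:R) - ((d z)%:R - m%:R)).
  move=> y z; case: (leqP (d y) (d z)) => h.
    apply: mulr_le0; rewrite subr_le0.
      by rewrite ler_nat leq_ffact_l.
    by rewrite lerD2r ler_nat.
  apply: mulr_ge0; rewrite subr_ge0.
    by rewrite ler_nat leq_ffact_l // ltnW.
  by rewrite lerD2r ler_nat ltnW.
have h2 := hch hmono.
have h3 : (n%:R * P) * (n%:R * (A - m%:R)) <= (\sum_y ((d y) ^_ m)%:R) * (\sum_y ((d y)%:R - m%:R)).
  apply: ler_pM => //.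
  - by apply: mulr_ge0.
  - by apply: mulr_ge0 => //; rewrite subr_ge0.
have h4 : n%:R * (n%:R * (P * (A - m%:R))) <= n%:R * \sum_y ((d y) ^_ m)%:R * ((d y)%:R - m%:R).
  apply: le_trans h2; apply: le_trans h3.
  rewrite le_eqVlt; apply/orP; left; apply/eqP; ring.
have n0' : (0 : R) < n%:R by rewrite ltr0n.
by move: h4; rewrite ler_pM2l.
Qed.

Lemma kst (R : realFieldType) (T : finType) n (M : {set T}) (N : T -> {set 'I_n}) (c : R) (m : nat) :
 (0 < n)%N -> 0 < c -> (forall f, f \in M -> c * n%:R <= #|N f|%:R) -> (m <= #|M|)%N ->
 (m%:R - 1) * 2 <= c * #|M|%:R ->
 exists K : {set T}, [/\ K \subset M, #|K| = m &
    n%:R * (c / 2) ^+ m <= #|[set y | [forall f in K, y \in N f]]|%:R].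
Proof.
move=> n0 c0 hN mM hmc.
pose D y := [set f in M | y \in N f].
pose Z (K : {set T}) := [set y | [forall f in K, y \in N f]].
pose Ks := [set K : {set T} | K \subset M & #|K| == m].
have cardKs : #|Ks| = 'C(#|M|, m) by rewrite cards_draws.
have hsumd : (\sum_y #|D y| = \sum_(f in M) #|N f|)%N.
  have E1 : forall y, #|D y| = (\sum_(f in M) (if y \in N f then 1 else 0))%N.
    move=> y; rewrite -big_mkcondr -sum1_card; apply: eq_bigl => f.
    by rewrite !inE.
  rewrite (eq_bigr _ (fun y _ => E1 y)) exchange_big /=; apply: eq_bigr => f _.
  by rewrite -big_mkcond sum1_card.
have hA : n%:R * (c * #|M|%:R) <= \sum_y (#|D y|)%:R.
  rewrite -natr_sum hsumd natr_sum.
  apply: le_trans (ler_sum _ (fun f hf => hN f hf)).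
  rewrite sumr_const -[_ *+ _]mulr_natr le_eqVlt; apply/orP; left; apply/eqP; ring.
have hm' : m%:R - 1 <= c * #|M|%:R.
  have h0 : 0 <= c * #|M|%:R by apply: mulr_ge0 => //; apply: ltW.
  case: m hmc {mM cardKs Ks} => [|m'] hmc; first lra.
  have : (1:R) <= m'.+1%:R by rewrite ler1n.
  lra.
have hff := @ffact_sum R n (fun y => #|D y|) _ n0 hA m hm'.
have hdc : (\sum_y #|D y| ^_ m = m`! * \sum_(K in Ks) #|Z K|)%N.
  have E2 : forall y, ('C(#|D y|, m) = \sum_(K in Ks) (if y \in Z K then 1 else 0))%N.
    move=> y; rewrite -cards_draws -big_mkcondr -sum1_card; apply: eq_bigl => K.
    rewrite !inE; apply/idP/idP.
      case/andP=> /subsetP hK ->; rewrite andbT; apply/andP; split.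
        by apply/subsetP => f /hK; rewrite inE => /andP [].
      by apply/forallP => f; apply/implyP => /hK; rewrite inE => /andP [].
    case/andP => /andP [/subsetP hKM ->] /forallP hf; rewrite andbT.
    apply/subsetP => f fK; rewrite inE hKM //=.
    by have := hf f; rewrite fK.
  under eq_bigr => y _ do rewrite -bin_ffact mulnC E2.
  rewrite -big_distrr /=; congr (_ * _)%N; rewrite exchange_big /=; apply: eq_bigr => K _.
  by rewrite -big_mkcond sum1_card.
have [K0 K0Ks] : exists K0, K0 \in Ks.
  have : (0 < #|Ks|)%N by rewrite cards_draws bin_gt0.
  by rewrite card_gt0 => /set0Pn.
case: (@arg_maxnP _ K0 (fun K => K \in Ks) (fun K => #|Z K|) K0Ks) => K KKs Kmax.
have hsum : (\sum_(K' in Ks) #|Z K'| <= #|Ks| * #|Z K|)%N.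
  rewrite -sum_nat_const; apply: leq_sum => K' hK'; exact: Kmax.
have hff2 : (\sum_y #|D y| ^_ m <= #|M| ^_ m * #|Z K|)%N.
  rewrite cardKs in hsum; rewrite hdc -bin_ffact [('C(_, _) * _)%N]mulnC -mulnA leq_mul2l hsum orbT //.
have /andP [KM /eqP Km] : (K \subset M) && (#|K| == m) by move: KKs; rewrite /Ks inE.
exists K; split => //.
have hpos : (0 < #|M| ^_ m)%N by rewrite ffact_gt0.
have hprod : (c / 2) ^+ m * (#|M| ^_ m)%:R <= \prod_(i < m) (c * #|M|%:R - i%:R).
  rewrite ffact_prod natr_prod -[in X in X * _](card_ord m) -prodr_const -big_split /=.
  apply: ler_prod => i _; rewrite natrB; last by apply: leq_trans (ltnW (ltn_ord i)) mM.
  have hi : (i%:R + 1 : R) <= m%:R by rewrite natr1 ler_nat ltn_ord.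
  have hci : 0 <= c * i%:R by apply: mulr_ge0 => //; apply: ltW.
  have hcM : 0 <= c * #|M|%:R by apply: mulr_ge0 => //; apply: ltW.
  have hiM : (i%:R : R) <= #|M|%:R by rewrite ler_nat; apply: leq_trans (ltnW (ltn_ord i)) mM.
  apply/andP; split; first by apply: mulr_ge0; [apply: divr_ge0; [apply: ltW|] | rewrite subr_ge0].
  rewrite mulrBr. lra.
have hfin : n%:R * (c / 2) ^+ m * (#|M| ^_ m)%:R <= (#|M| ^_ m)%:R * #|Z K|%:R.
  rewrite -mulrA; apply: le_trans (_ : n%:R * \prod_(i < m) (c * #|M|%:R - i%:R) <= _).
    by rewrite ler_pM2l // ltr0n.
  apply: le_trans hff _; rewrite -natrM -natr_sum ler_nat; exact: hff2.
by move: hfin; rewrite mulrC ler_pM2l // ltr0n.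
Qed.
Section Ineq.
Variable R : realType.

Lemma eps_facts (r : nat) (c : R) : (2 <= r)%N -> 0 < c ->
  let e := Num.min (c / 2) (1 / (2 * r%:R * ln (r%:R : R))) in
  [/\ 0 < e, e <= c / 2, 0 < r%:R * ln (r%:R : R) & e * (r%:R * ln (r%:R : R)) <= 1 / 2].
Proof.
move=> r2 c0 e.
have lr : 0 < ln (r%:R : R) by apply: ln_gt0; rewrite ltr1n.
have R0 : 0 < r%:R * ln (r%:R : R) by apply: mulr_gt0 => //; rewrite ltr0n; lia.
have h1 : e <= c / 2 by rewrite /e ge_min lexx.
have h2 : e <= 1 / (2 * r%:R * ln (r%:R : R)) by rewrite /e ge_min lexx orbT.
split => //.
- rewrite /e lt_min; apply/andP; split; first by lra.
  by rewrite -mulrA divr_gt0 // mulr_gt0.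
- have h3 : 1 / (2 * r%:R * ln (r%:R : R)) * (r%:R * ln (r%:R : R)) = 1 / 2.
    by field; apply/andP; split; rewrite gt_eqF // ?ltr0n; lia.
  rewrite -h3; apply: ler_pM => //; last by apply: ltW.
  by apply: ltW; rewrite /e lt_min; apply/andP; split; [lra|rewrite -mulrA divr_gt0 // mulr_gt0].
Qed.

Lemma ln_le_of (x y : R) : 0 < x -> 0 < y -> ln x <= ln y -> x <= y.
Proof. by move=> x0 y0; rewrite ler_ln // posrE. Qed.

Lemma ln_natX (r k : nat) : (0 < r)%N -> ln ((r ^ k)%:R : R) = k%:R * ln (r%:R : R).
Proof. by move=> r0; rewrite natrX lnXn ?ltr0n // mulr_natl. Qed.


Lemma base_bound (r n m : nat) (c : R) : (2 <= r)%N -> 0 < c -> (0 < n)%N -> (2 <= m)%N ->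
  (m.-1)%:R <= Num.min (c / 2) (1 / (2 * r%:R * ln (r%:R : R))) * ln (n%:R : R) ->
  ((r ^ (r * m.-1))%:R : R) <= c * n%:R.
Proof.
move=> r2 c0 n0 m2; have [e0 ec eR0 eR] := eps_facts r2 c0.
set e := Num.min _ _ in e0 ec eR *; set L := ln (n%:R : R); set R0 := r%:R * ln (r%:R : R) in eR0 eR *.
move=> hm.
have A1 : (1 : R) <= (m.-1)%:R by rewrite ler1n; lia.
have eL : 1 <= e * L by lra.
have L0 : 0 < L.
  rewrite ltNge; apply/negP => hL.
  have : e * L <= 0 by rewrite pmulr_rle0.
  lra.
have cL : 2 <= c * L.
  have : e * L <= c / 2 * L by rewrite ler_pM2r.
  lra.
apply: ln_le_of.
- by rewrite ltr0n expn_gt0; apply/orP; left; lia.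
- by rewrite mulr_gt0 // ltr0n.
rewrite ln_natX; last by lia.
rewrite lnM ?posrE ?ltr0n //.
have hc : - ln c <= 1 / c.
  have ci : 0 < c^-1 by rewrite invr_gt0.
  have := ln_sublinear ci; rewrite lnV ?posrE // => h.
  rewrite div1r; exact: ltW.
have hc2 : 1 / c <= L / 2.
  rewrite ler_pdivrMr // mulrC; lra.
have h1 : (r * m.-1)%:R * ln (r%:R : R) = (m.-1)%:R * R0 by rewrite natrM /R0; ring.
rewrite h1.
have h2 : (m.-1)%:R * R0 <= e * L * R0 by rewrite ler_pM2r.
have h3 : e * L * R0 <= L / 2.
  rewrite -mulrA [L * R0]mulrC mulrA.
  have : e * R0 * L <= 1 / 2 * L by rewrite ler_pM2r.
  lra.
rewrite -/L; lra.
Qed.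

Lemma step_bound (r n m : nat) (c x : R) : (2 <= r)%N -> 0 < c -> c <= 1 / 2 -> (0 < n)%N -> (2 <= m)%N ->
  (m.-1)%:R <= x -> x <= Num.min (c / 2) (1 / (2 * r%:R * ln (r%:R : R))) ^+ 2 * ln (n%:R : R) ->
  ((r ^ (r * m.-1))%:R : R) <= n%:R * (c / 2) ^+ m.
Proof.
move=> r2 c0 c1 n0 m2; have [e0 ec eR0 eR] := eps_facts r2 c0.
set e := Num.min _ _ in e0 ec eR *; set L := ln (n%:R : R); set R0 := r%:R * ln (r%:R : R) in eR0 eR *.
move=> hx hxL.
set A := (m.-1)%:R in hx.
have A1 : (1 : R) <= A by rewrite ler1n; lia.
have hmA : (m%:R : R) = A + 1 by rewrite /A natr1 prednK //; lia.
have L0 : 0 < L.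
  rewrite ltNge; apply/negP => hL.
  have : e ^+ 2 * L <= 0 by rewrite pmulr_rle0 // exprn_gt0.
  lra.
have e4 : e <= 1 / 4 by lra.
apply: ln_le_of.
- by rewrite ltr0n expn_gt0; apply/orP; left; lia.
- by rewrite mulr_gt0 ?ltr0n // exprn_gt0 // divr_gt0.
rewrite ln_natX; last by lia.
rewrite lnM ?posrE ?ltr0n ?exprn_gt0 ?divr_gt0 //.
rewrite lnXn ?divr_gt0 // -[ln (c / 2) *+ m]mulr_natr hmA -/L.
set q := ln (2 / c).
have hq : ln (c / 2) = - q.
  rewrite /q -lnV ?posrE ?divr_gt0 //; congr ln; rewrite invf_div //.
rewrite hq.
have q0 : 0 <= q by apply: ln_ge0; rewrite ler_pdivlMr // mul1r; lra.
have q1 : q <= 2 / c by apply: ltW; apply: ln_sublinear; rewrite divr_gt0.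
have h1 : (r * m.-1)%:R * ln (r%:R : R) = A * R0 by rewrite natrM /R0 /A; ring.
rewrite h1.
have eeL : 0 <= e ^+ 2 * L by rewrite mulr_ge0 // ?exprn_ge0 // ltW.
have h2 : A * R0 <= e ^+ 2 * L * R0 by rewrite ler_pM2r //; lra.
have h3 : e ^+ 2 * L * R0 = (e * R0) * (e * L) by ring.
have h4 : (e * R0) * (e * L) <= 1 / 2 * (e * L) by rewrite ler_pM2r ?mulr_gt0.
have h5 : e * L <= L / 4.
  have : e * L <= 1 / 4 * L by rewrite ler_pM2r.
  lra.
have g1 : (A + 1) * q <= 2 * A * q by apply: (ler_wpM2r q0); lra.
have g2 : A * q <= e ^+ 2 * L * q by apply: (ler_wpM2r q0); lra.
have g3 : e ^+ 2 * L * q <= e ^+ 2 * L * (2 / c) by apply: (ler_wpM2l eeL).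
have g4 : e ^+ 2 * L * (2 / c) = 2 * (e * L) * (e / c) by rewrite expr2; field; rewrite gt_eqF.
have g5 : e / c <= 1 / 2 by rewrite ler_pdivrMr // mulrC; lra.
have g6 : 2 * (e * L) * (e / c) <= 2 * (e * L) * (1 / 2).
  by apply: ler_wpM2l => //; apply: mulr_ge0; [lra| apply: mulr_ge0; lra].
lra.
Qed.

End Ineq.

Definition restr l n (e : edge l.+1 n) : edge l n := [ffun i => e (lift ord_max i)].
Definition ext l n (f : edge l n) (y : 'I_n) : edge l.+1 n :=
  [ffun i => if unlift ord_max i is Some j then f j else y].

Lemma ext_lift l n (f : edge l n) y j : ext f y (lift ord_max j) = f j.
Proof. by rewrite ffunE liftK. Qed.

Lemma ext_max l n (f : edge l n) y : ext f y ord_max = y.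
Proof. by rewrite ffunE unlift_none. Qed.

Lemma restr_ext l n (f : edge l n) y : restr (ext f y) = f.
Proof. by apply/ffunP => j; rewrite ffunE ext_lift. Qed.

Lemma ext_restr l n (e : edge l.+1 n) : ext (restr e) (e ord_max) = e.
Proof.
apply/ffunP => i; rewrite ffunE; case: unliftP => [j ->|-> //].
by rewrite ffunE.
Qed.

Lemma card_edge l n : #|{: edge l n}| = (n ^ l)%N.
Proof. by rewrite card_ffun !card_ord. Qed.

Lemma card_split l n (H : {set edge l.+1 n}) :
  #|H| = (\sum_(f : edge l n) #|[set y | ext f y \in H]|)%N.
Proof.
rewrite -sum1_card (partition_big (@restr l n) predT) //=.
apply: eq_bigr => f _.
have -> : #|[set y | ext f y \in H]| = #|[set e in H | restr e == f]|.
  have inj : injective (ext f).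
    by move=> y y' h; rewrite -(ext_max f y) h ext_max.
  rewrite -(card_imset _ inj).
  apply: eq_card => e; apply/imsetP/idP.
    by move=> [y]; rewrite inE => hy ->; rewrite inE hy restr_ext eqxx.
  rewrite inE => /andP [eH /eqP <-]; exists (e ord_max); last by rewrite ext_restr.
  by rewrite inE ext_restr.
by rewrite -sum1_card; apply: eq_bigl => e; rewrite inE.
Qed.

Lemma trivial_sol l n r (H : {set edge l n}) (phi : 'I_l -> {set 'I_n} -> 'I_r) :
  (0 < r)%N ->
  exists S : 'I_l -> {set 'I_n},
    [/\ (forall i, #|S i| = 0%N), (forall i, monochromatic phi i (S i)) & covers H S 0].
Proof.
move=> r0; exists (fun _ => set0); split.
- by move=> i; rewrite cards0.
- by move=> i; exists (Ordinal r0) => u v; rewrite inE.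
- split; first by move=> i j _ u v; rewrite inE.
  exists set0; split.
  + exact: sub0set.
  + by rewrite cards0.
  + by move=> e; rewrite inE.
  + by move=> e f; rewrite inE.
Qed.

Lemma c_small (R : realType) l n (c : R) (H : {set edge l n}) : (0 < n)%N ->
  l%:R * c * n%:R ^+ l <= #|H|%:R -> l%:R * c <= 1.
Proof.
move=> n0 hH.
have : (#|H| <= n ^ l)%N by rewrite -card_edge max_card.
rewrite -(ler_nat R) natrX => h.
have np : (0 : R) < n%:R ^+ l by rewrite exprn_gt0 // ltr0n.
have := le_trans hH h; rewrite -[X in _ <= X]mul1r ler_pM2r //.
Qed.

Lemma ln_nat_le0 (R : realType) n : (n <= 1)%N -> ln (n%:R : R) <= 0.
Proof. by move=> h; apply: ln_le0; rewrite lern1. Qed.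

Lemma base_case (R : realType) (r n : nat) (c : R) (H : {set edge 1 n})
    (phi : 'I_1 -> {set 'I_n} -> 'I_r) :
  (2 <= r)%N -> 0 < c -> 1%:R * c * n%:R ^+ 1 <= #|H|%:R ->
  exists (m : nat) (S : 'I_1 -> {set 'I_n}),
    [/\ (Num.min (c / 2) (1 / (2 * r%:R * ln (r%:R : R)))) ^+ 1 * ln (n%:R : R) <= m%:R,
        (forall i, #|S i| = m),
        (forall i, monochromatic phi i (S i))
      & covers H S m].
Proof.
move=> r2 c0 hH.
have [e0 ec eR0 eR] := eps_facts r2 c0.
set e := Num.min _ _ in e0 ec eR *.
set L := ln (n%:R : R).
have [hx|hx] := lerP (e ^+ 1 * L) 0.
  have [S [h1 h2 h3]] := trivial_sol H phi (ltnW r2).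
  by exists 0%N, S; split.
have n1 : (1 < n)%N.
  rewrite ltnNge; apply/negP => hn.
  have : e ^+ 1 * L <= 0 by rewrite pmulr_rle0 ?exprn_gt0 // ln_nat_le0.
  lra.
have n0 : (0 < n)%N by apply: ltnW.
rewrite expr1 in hx *.
pose m := (Num.truncn (e * L)).+1.
have hm1 : (m.-1)%:R <= e * L by rewrite /= truncn_le ltW.
have hmx : e * L < m%:R by apply: truncnS_gt.
pose cst := fun y : 'I_n => [ffun _ : 'I_1 => y] : edge 1 n.
have cst_inj : injective cst.
  by move=> y y' h; have := congr1 (fun f : edge 1 n => f ord0) h; rewrite /cst !ffunE.
pose Z := [set y | cst y \in H].
have cZ : #|Z| = #|H|.
  rewrite -(card_imset _ cst_inj); apply: eq_card => f; apply/imsetP/idP.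
    by move=> [y]; rewrite inE => hy ->.
  move=> fH; exists (f ord0); last by apply/ffunP => i; rewrite ffunE (ord1 i).
  by rewrite inE (_ : cst (f ord0) = f) //; apply/ffunP => i; rewrite ffunE (ord1 i).
have hZ : (r ^ (r * m.-1) <= #|Z|)%N.
  case hm : (m.-1) => [|m'].
    rewrite muln0 expn0 card_gt0; apply/set0Pn.
    have : (0 : R) < #|Z|%:R.
      by rewrite cZ; apply: lt_le_trans hH; rewrite mul1r expr1 mulr_gt0 // ltr0n.
    by rewrite ltr0n card_gt0 => /set0Pn.
  rewrite -hm -(ler_nat R); apply: le_trans (_ : c * n%:R <= _).
    apply: base_bound => //; first by rewrite /m /=; lia.
  by rewrite cZ; move: hH; rewrite mul1r expr1.
have [k [S [sZ cS mS]]] := ramsey (phi ord0) r2 (ltn0Sn _) hZ.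
exists m, (fun _ => S); split => //.
- exact: ltW.
- by move=> i; exists k; rewrite (ord1 i).
- split; first by move=> i j; rewrite (ord1 i) (ord1 j) eqxx.
  exists (cst @: S); split.
  + apply/subsetP => f /imsetP [y yS ->]; have := subsetP sZ y yS; by rewrite inE.
  + by rewrite card_imset.
  + by move=> f /imsetP [y yS ->] i; rewrite ffunE.
  + move=> f g /imsetP [y yS ->] /imsetP [y' y'S ->] hne i; rewrite !ffunE.
    by apply: contra hne => /eqP ->.
Qed.

Lemma nat_aux (t q : nat) : (t * 4 <= q)%N -> (0 < q)%N -> (t.+1 <= q)%N.
Proof. lia. Qed.

Lemma step_case (R : realType) (r n l : nat) (c : R) : (2 <= r)%N -> 0 < c -> (1 <= l)%N ->
  (forall (H : {set edge l n}) (phi : 'I_l -> {set 'I_n} -> 'I_r),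
    l%:R * c * n%:R ^+ l <= #|H|%:R ->
    exists (m : nat) (S : 'I_l -> {set 'I_n}),
    [/\ (Num.min (c / 2) (1 / (2 * r%:R * ln (r%:R : R)))) ^+ l * ln (n%:R : R) <= m%:R,
        (forall i, #|S i| = m),
        (forall i, monochromatic phi i (S i))
      & covers H S m]) ->
  forall (H : {set edge l.+1 n}) (phi : 'I_l.+1 -> {set 'I_n} -> 'I_r),
    l.+1%:R * c * n%:R ^+ l.+1 <= #|H|%:R ->
    exists (m : nat) (S : 'I_l.+1 -> {set 'I_n}),
    [/\ (Num.min (c / 2) (1 / (2 * r%:R * ln (r%:R : R)))) ^+ l.+1 * ln (n%:R : R) <= m%:R,
        (forall i, #|S i| = m),
        (forall i, monochromatic phi i (S i))
      & covers H S m].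
Proof.
move=> r2 c0 l1 IH H phi hH.
have [e0 ec eR0 eR] := eps_facts r2 c0.
set e := Num.min _ _ in IH e0 ec eR *.
set L := ln (n%:R : R) in IH *.
have [hx|hx] := lerP (e ^+ l.+1 * L) 0.
  have [S [h1 h2 h3]] := trivial_sol H phi (ltnW r2).
  by exists 0%N, S; split.
have n1 : (1 < n)%N.
  rewrite ltnNge; apply/negP => hn.
  have : e ^+ l.+1 * L <= 0 by rewrite pmulr_rle0 ?exprn_gt0 // ln_nat_le0.
  lra.
have n0 : (0 < n)%N by apply: ltnW.
have nR : (0 : R) < n%:R by rewrite ltr0n.
have c2 : c <= 1 / 2.
  have := c_small n0 hH.
  have : (2 : R) <= l.+1%:R by rewrite ler_nat.
  move=> h1 h2; have : 2 * c <= l.+1%:R * c by rewrite ler_pM2r.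
  lra.
pose N f := [set y | ext f y \in H].
pose H2 := [set f : edge l n | c * n%:R <= #|N f|%:R].
have hH2 : l%:R * c * n%:R ^+ l <= #|H2|%:R.
  have hsum : #|H|%:R = \sum_(f : edge l n) (#|N f|%:R : R) by rewrite card_split natr_sum.
  have hle : forall f : edge l n, (#|N f|%:R : R) <= (if f \in H2 then n%:R else 0) + c * n%:R.
    move=> f; case: ifP => hf.
      have : (#|N f| <= n)%N by apply: leq_trans (max_card _) _; rewrite card_ord.
      rewrite -(ler_nat R) => h; have : 0 <= c * n%:R by rewrite mulr_ge0 // ltW.
      lra.
    by rewrite add0r; move: hf; rewrite inE => /negbT; rewrite -ltNge => /ltW.
  have : \sum_(f : edge l n) (#|N f|%:R : R) <= \sum_(f : edge l n) ((if f \in H2 then n%:R else 0) + c * n%:R).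
    by apply: ler_sum => f _; exact: hle f.
  rewrite -hsum big_split /= -big_mkcond /=.
  rewrite !sumr_const -[n%:R *+ _]mulr_natr -[(c * n%:R) *+ _]mulr_natr.
  rewrite (_ : #|predT| = #|{: edge l n}|) // card_edge natrX.
  set P := n%:R ^+ l.
  move=> h; rewrite exprS -/P in hH.
  have : n%:R * (l%:R * c * P) <= n%:R * #|H2|%:R.
    move: hH h; rewrite -natr1; set h2 := #|H2|%:R.
    have E : (l%:R + 1) * c * (n%:R * P) = n%:R * (l%:R * c * P) + c * n%:R * P by ring.
    rewrite E; move: (n%:R * (l%:R * c * P)) (c * n%:R * P) => a b; lra.
  by rewrite ler_pM2l.

pose phi' := fun i : 'I_l => phi (lift ord_max i).
have [m' [S' [hm' hS' hmono' [hcross' [M' [M'H cM' M'S M'dis]]]]]] := IH H2 phi' hH2.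
set x := e ^+ l.+1 * L in hx.
set y := e ^+ l * L in hm'.
have hxy : x = e * y by rewrite /x /y exprS mulrA.
pose m := (Num.truncn x).+1.
have hm1 : (m.-1)%:R <= x by rewrite /= truncn_le ltW.
have hmx : x < m%:R by apply: truncnS_gt.
have ypos : 0 < y.
  rewrite ltNge; apply/negP => hy.
  have : x <= 0 by rewrite hxy pmulr_rle0.
  lra.
have em' : (m.-1)%:R <= e * m'%:R.
  apply: le_trans hm1 _; rewrite hxy ler_pM2l //.
have e4 : e <= 1 / 4 by lra.
have m'1 : (0 < m')%N by rewrite lt0n; apply/negP => /eqP h0; rewrite h0 mulr0n in hm'; lra.
have hmm' : (m <= m')%N.
  have : ((m.-1) * 4 <= m')%N.
    rewrite -(ler_nat R) natrM.
    have : e * m'%:R <= 1 / 4 * m'%:R by rewrite ler_pM2r // ltr0n.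
    lra.
  by move=> h4; apply: nat_aux h4 m'1.
have hmc : (m%:R - 1) * 2 <= c * #|M'|%:R.
  rewrite cM' (_ : m%:R - 1 = (m.-1)%:R); last by rewrite /m /= -natr1 addrK.
  have : e * m'%:R <= c / 2 * m'%:R by rewrite ler_pM2r // ltr0n.
  lra.
have hN : forall f, f \in M' -> c * n%:R <= #|N f|%:R.
  by move=> f /(subsetP M'H); rewrite inE.
have [K [KM cK hZ]] := kst n0 c0 hN (ltac:(rewrite cM'; exact: hmm')) hmc.
set Z := [set y | [forall f in K, y \in N f]] in hZ.
have hZr : (r ^ (r * m.-1) <= #|Z|)%N.
  case hm : (m.-1) => [|m2].
    rewrite muln0 expn0 card_gt0; apply/set0Pn.
    have : (0 : R) < #|Z|%:R.
      apply: lt_le_trans hZ; rewrite mulr_gt0 // exprn_gt0 //; lra.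
    by rewrite ltr0n card_gt0 => /set0Pn.
  rewrite -hm -(ler_nat R); apply: le_trans hZ.
  apply: (step_bound r2 c0 c2 n0 _ hm1); first by move: hm; rewrite /m /= => ->.
  have L0 : 0 < L.
    rewrite ltNge; apply/negP => hL.
    have : x <= 0 by rewrite /x pmulr_rle0 // exprn_gt0.
    lra.
  rewrite /x.
  rewrite ler_pM2r //; apply: ler_wiXn2l => //; lra.
have [k [S [sZ cS mS]]] := ramsey (phi ord_max) r2 (ltn0Sn _) hZr.
have hKM' : forall f, f \in K -> f \in M' by move=> f h; apply: (subsetP KM).
have hKS : forall f yy, f \in K -> yy \in S -> ext f yy \in H.
  move=> f yy fK yS; have := subsetP sZ yy yS; rewrite inE => /forallP /(_ f) /implyP /(_ fK).
  by rewrite inE.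
have M'inj : forall j f g, f \in M' -> g \in M' -> f j = g j -> f = g.
  move=> j f g fM gM hfg; apply/eqP; apply/negPn/negP => hne.
  by have := M'dis f g fM gM hne j; rewrite hfg eqxx.
have H2ext : forall g, g \in H2 -> exists yy, ext g yy \in H.
  move=> g; rewrite inE => hg.
  have : (0 < #|N g|)%N.
    by rewrite -(ltr0n R); apply: lt_le_trans hg; rewrite mulr_gt0.
  by rewrite card_gt0 => /set0Pn [yy]; rewrite inE => hyy; exists yy.
pose yd0 : 'I_n := Ordinal n0.
pose f0 : edge l n := [ffun _ => yd0].
pose eK := enum K; pose eS := enum S.
have szK : size eK = m by rewrite -cardE.
have szS : size eS = m by rewrite -cardE.
have nthK : forall i : 'I_m, nth f0 eK i \in K.
  by move=> i; rewrite -mem_enum mem_nth // szK.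
have nthS : forall i : 'I_m, nth yd0 eS i \in S.
  by move=> i; rewrite -mem_enum mem_nth // szS.
pose g := fun i : 'I_m => ext (nth f0 eK i) (nth yd0 eS i).
have g_inj : injective g.
  move=> i i' h; rewrite /g in h.
  have hs : nth yd0 eS i = nth yd0 eS i' by rewrite -(ext_max (nth f0 eK i) (nth yd0 eS i)) h ext_max.
  apply: val_inj; apply/eqP; rewrite -(nth_uniq yd0 _ _ (enum_uniq S)) ?szS; [by rewrite -/eS hs | exact: ltn_ord | exact: ltn_ord].
pose Snew := fun i : 'I_l.+1 => if unlift ord_max i is Some j then [set (f : edge l n) (j : 'I_l) | f in K] else S.
exists m, Snew; split.
- exact: ltW hmx.
- move=> i; rewrite /Snew; case: unliftP => [j _|_] //=.
  rewrite card_in_imset // => f f' fK f'K; exact: M'inj (hKM' _ fK) (hKM' _ f'K).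
- move=> i; rewrite /Snew; case: unliftP => [j ->|->] /=.
    have [k' hk'] := hmono' j; exists k' => u v hu hv; apply: hk'.
      by move: hu => /imsetP [f fK ->]; apply: M'S (hKM' _ fK) j.
    by move: hv => /imsetP [f fK ->]; apply: M'S (hKM' _ fK) j.
  by exists k.
- split.
  + move=> i i' hii' u v; rewrite /Snew.
    case: unliftP hii' => [j ->|->]; case: unliftP => [j' ->|->]; rewrite ?liftK ?unlift_none /= => hii'.
    * move=> /imsetP [f fK ->] /imsetP [f' f'K ->].
      have hjj : j != j' by apply: contra hii' => /eqP ->.
      have := hcross' j j' hjj (f j) (f' j') (M'S f (hKM' f fK) j) (M'S f' (hKM' f' f'K) j').
      rewrite /inK2 => /existsP [gg /andP [gH2 /andP [/eqP g1 /eqP g2]]].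
      have [yy hyy] := H2ext gg gH2.
      by apply/existsP; exists (ext gg yy); rewrite hyy !ext_lift g1 g2 !eqxx.
    * move=> /imsetP [f fK ->] vS.
      by apply/existsP; exists (ext f v); rewrite hKS // ext_lift ext_max !eqxx.
    * move=> uS /imsetP [f fK ->].
      by apply/existsP; exists (ext f u); rewrite hKS // ext_max ext_lift !eqxx.
    * by rewrite eqxx in hii'.
  + exists [set g i | i : 'I_m]; split.
    * by apply/subsetP => ee /imsetP [i _ ->]; exact: hKS (nthK i) (nthS i).
    * by rewrite card_imset // card_ord.
    * move=> ee /imsetP [a _ ->] i; rewrite /Snew /g.
      case: unliftP => [j ->|->]; rewrite ?liftK ?unlift_none /= ?ext_lift ?ext_max.
        exact: imset_f (nthK a).
      exact: nthS a.
    * move=> ee ff /imsetP [a _ ->] /imsetP [b _ ->] hne i.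
      have hab : a != b by apply: contra hne => /eqP ->.
      rewrite /g; case: (unliftP ord_max i) => [j ->|->]; rewrite ?ext_lift ?ext_max.
        apply: M'dis (hKM' _ (nthK a)) (hKM' _ (nthK b)) _ j.
        by rewrite nth_uniq ?szK ?enum_uniq.
      by rewrite nth_uniq ?szS ?enum_uniq.
Qed.

Theorem lemma3p1 (R : realType) (r l n : nat) (c : R)
    (H : {set edge l n}) (phi : 'I_l -> {set 'I_n} -> 'I_r) :
  (2 <= r)%N -> (1 <= l)%N -> 0 < c ->
  l%:R * c * n%:R ^+ l <= #|H|%:R ->
  exists (m : nat) (S : 'I_l -> {set 'I_n}),
    [/\ (Num.min (c / 2) (1 / (2 * r%:R * ln (r%:R : R)))) ^+ l * ln (n%:R : R) <= m%:R,
        (forall i, #|S i| = m),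
        (forall i, monochromatic phi i (S i))
      & covers H S m].
Proof.
move=> r2 l1 c0.
elim: l l1 H phi => [//|l IHl] hl H phi hH.
case: l IHl hl H phi hH => [|l] IHl hl H phi hH.
  exact: base_case.
by apply: (step_case r2 c0 _ (IHl _)) hH.
Qed.
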